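(* Let $g_{ii}(u)$ be a metric of the strictly hyperbolic DN system $u^i_t=v^i(u)u^i_x$, $i=1,\dots,n$, whose curvature tensor has the special form $$R^{ik}_{ik}=w^i_{(1)}+w^k_{(1)}+w^i_{(2)}v^k+w^k_{(2)}v^i,\qquad i\neq k,$$ where $w^i_{(1)},w^i_{(2)}$ are affinors of $g$. Let $B_t=A_x$, $N_t=M_x$ be conservation laws with $BM-AN\neq 0$, and consider the reciprocal transformation $d\hat x=B\,dx+A\,dt$, $d\hat t=N\,dx+M\,dt$. Let $T^{(l)},Z^{(l)}$ ($l=1,2$) be functions with $\partial_iT^{(l)}=w^i_{(l)}\partial_iB$ and $\partial_iZ^{(l)}=w^i_{(l)}\partial_iN$ for all $i$. Define $$n^i=\nabla^i\nabla_iN+w^i_{(1)}N+Z^{(1)}+w^i_{(2)}M+v^iZ^{(2)},\qquad b^i=\nabla^i\nabla_iB+w^i_{(1)}B+T^{(1)}+w^i_{(2)}A+v^iT^{(2)},$$ $$Q=\tfrac12(\nabla B)^2+BT^{(1)}+AT^{(2)},\qquad \mathcal R=\tfrac12(\nabla N)^2+NZ^{(1)}+MZ^{(2)},$$ and let $P,S$ be functions with $$P+S=\langle\nabla N,\nabla B\rangle+T^{(1)}N+T^{(2)}M+Z^{(1)}B+Z^{(2)}A.$$ Set $$\hat n^i=\frac{H_i}{\hat H_i}n^i-P-\hat v^i\mathcal R,\qquad \hat b^i=\frac{H_i}{\hat H_i}b^i-Q-\hat v^iS,$$ where $\hat H_i=\sqrt{\hat g_{ii}}$, so that $H_i/\hat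 H_i=(BM-AN)/(M-Nv^i)$. Then the only possibly nonzero components of the Riemannian curvature tensor of the reciprocal metric $\hat g_{ii}$ are $$\hat R^{ik}_{ik}=\hat n^i\hat v^k+\hat n^k\hat v^i+\hat b^i+\hat b^k,\qquad i\neq k.$$
   Context: Setting: $u=(u^1,\dots,u^n)$ and $u^i_t=v^i(u)u^i_x$, $i=1,\dots,n$, is a hydrodynamic type system in Riemann invariants with smooth real, pairwise distinct characteristic velocities $v^i$ (strict hyperbolicity). We work with smooth rapidly decreasing functions of $x$, so that $(d/dx)^{-1}f_x=f$. The system is an integrable Dubrovin–Novikov (DN) system, i.e. it has a local Hamiltonian structure of hydrodynamic type defined by a flat non-degenerate diagonal metric. Write $\partial_i=\partial/\partial u^i$. A metric of the system is a non-degenerate diagonal metric $g_{ii}(u)$ such that, for suitable functions $f^i(u^i)$ of one variable, $f^ig_{ii}$ is a flat metric of a local Hamiltonian structure of the system. Equivalently, its Lamé coefficients $H_i=\sqrt{g_{ii}}$ satisfy $\partial_j\ln H_i=\partial_jv^i/(v^j-v^i)$ for $i\neq j$. We write $g^{ii}=1/g_{ii}$, and $\Gamma^i_{jk}$ for the Christoffel symbols. For such a metric, the only possibly nonzero curvature components are $R^{ik}_{ik}$, $i\neq k$. An affinor of $g$ is a function $w^i(u)$ with $\partial_jw^i/(w^j-w^i)=\partial_j\ln H_i$ for all $i\neq j$. Conservation law: a pair of functions with $B(u)_t=A(u)_x$ on solutions, i.e. $\partial_iA=v^i\partial_iB$ for all $i$. Reciprocal transformation: $d\hat x=B\,dx+A\,dt$,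 $d\hat t=N\,dx+M\,dt$. The reciprocal system is $u^i_{\hat t}=\hat v^iu^i_{\hat x}$ with $$\hat v^i=\frac{Bv^i-A}{M-Nv^i},$$ and the reciprocal metric is $$\hat g_{ii}=\Big(\frac{M-Nv^i}{BM-AN}\Big)^2g_{ii}.$$ Notation: - $(\nabla B)^2=\sum_mg^{mm}(\partial_mB)^2$; - $\langle\nabla B,\nabla N\rangle=\sum_mg^{mm}\partial_mB\,\partial_mN$; - $\nabla^i\nabla_iB=g^{ii}\big(\partial_i^2B-\sum_m\Gamma^m_{ii}\partial_mB\big)$ (no summation over $i$). *)

(* Defs.v *)
From Stdlib Require Import Reals Lra List Arith ClassicalEpsilon.
Import ListNotations.
Open Scope R_scope.

(* Points of R^n are represented as [nat -> R]; only the coordinates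
   0..n-1 are ever varied. *)
Definition pt := nat -> R.
Definition fn := pt -> R.

Definition upd (u : pt) (i : nat) (t : R) : pt :=
  fun j => if Nat.eqb j i then t else u j.

Definition ex_pd (i : nat) (f : fn) (u : pt) : Prop :=
  exists l, derivable_pt_lim (fun t => f (upd u i t)) (u i) l.

(* the partial derivative (its value when it exists; chosen by epsilon) *)
Definition pd (i : nat) (f : fn) : fn :=
  fun u => epsilon (inhabits 0)
             (fun l => derivable_pt_lim (fun t => f (upd u i t)) (u i) l).

Fixpoint iter_pd (l : list nat) (f : fn) : fn :=
  match l with
  | [] => f
  | i :: l' => pd i (iter_pd l' f)
  end.

Definition near (n : nat) (u : pt) (delta : R) (u' : pt) : Prop :=
  (forall i, (i < n)%nat -> Rabs (u' i - u i) < delta) /\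
  (forall i, (n <= i)%nat -> u' i = u i).

Definition open_dom (n : nat) (D : pt -> Prop) : Prop :=
  forall u, D u -> exists delta, delta > 0 /\ forall u', near n u delta u' -> D u'.

Definition cont_at (n : nat) (D : pt -> Prop) (F : fn) (u : pt) : Prop :=
  forall eps, eps > 0 -> exists delta, delta > 0 /\
    forall u', near n u delta u' -> D u' -> Rabs (F u' - F u) < eps.

Definition smooth (n : nat) (D : pt -> Prop) (f : fn) : Prop :=
  forall l, Forall (fun i => (i < n)%nat) l -> forall u, D u ->
    cont_at n D (iter_pd l f) u /\
    (forall i, (i < n)%nat -> ex_pd i (iter_pd l f) u).

Definition sumR (n : nat) (f : nat -> R) : R :=
  fold_right (fun m acc => f m + acc) 0 (seq 0 n).

(* A diagonal metric is given by its diagonal entries g i = g_ii. *)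
Definition Gamma (g : nat -> fn) (m j k : nat) : fn :=
  fun u => / (2 * g m u) *
    ((if Nat.eqb m k then pd j (g m) u else 0)
     + (if Nat.eqb m j then pd k (g m) u else 0)
     - (if Nat.eqb j k then pd m (g j) u else 0)).

Definition Riem (n : nat) (g : nat -> fn) (i j k l : nat) : fn :=
  fun u => pd k (Gamma g i l j) u - pd l (Gamma g i k j) u
    + sumR n (fun m => Gamma g i k m u * Gamma g m l j u
                       - Gamma g i l m u * Gamma g m k j u).

(* R^{ik}_{ik} = g^{kk} R^i_{kik}  (= sectional curvature of the (i,k) plane) *)
Definition Rik (n : nat) (g : nat -> fn) (i k : nat) : fn :=
  fun u => Riem n g i k i k u / g k u.

Definition nondeg (n : nat) (D : pt -> Prop) (g : nat -> fn) : Prop :=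
  forall i u, (i < n)%nat -> D u -> g i u <> 0.

Definition flat (n : nat) (D : pt -> Prop) (g : nat -> fn) : Prop :=
  forall i j k l u, (i < n)%nat -> (j < n)%nat -> (k < n)%nat -> (l < n)%nat ->
    D u -> Riem n g i j k l u = 0.

Definition strictly_hyperbolic (n : nat) (D : pt -> Prop) (v : nat -> fn) : Prop :=
  forall i j u, (i < n)%nat -> (j < n)%nat -> i <> j -> D u -> v i u <> v j u.

(* d_j ln H_i, with H_i = sqrt g_ii *)
Definition dlnH (g : nat -> fn) (j i : nat) : fn :=
  fun u => pd j (g i) u / (2 * g i u).

(* g is a metric of the system u^i_t = v^i u^i_x (Lame-coefficient form) *)
Definition metric_of_system (n : nat) (D : pt -> Prop) (v g : nat -> fn) : Prop :=
  nondeg n D g /\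
  forall i j u, (i < n)%nat -> (j < n)%nat -> i <> j -> D u ->
    dlnH g j i u = pd j (v i) u / (v j u - v i u).

Definition affinor (n : nat) (D : pt -> Prop) (g w : nat -> fn) : Prop :=
  forall i j u, (i < n)%nat -> (j < n)%nat -> i <> j -> D u ->
    pd j (w i) u = (w j u - w i u) * dlnH g j i u.

(* B_t = A_x is a conservation law:  d_i A = v^i d_i B *)
Definition conservation_law (n : nat) (D : pt -> Prop) (v : nat -> fn) (B A : fn) : Prop :=
  forall i u, (i < n)%nat -> D u -> pd i A u = v i u * pd i B u.

(* DN integrability: existence of a flat nondegenerate metric of the system *)
Definition DN_system (n : nat) (D : pt -> Prop) (v : nat -> fn) : Prop :=
  exists g0 : nat -> fn, (forall i, (i < n)%nat -> smooth n D (g0 i)) /\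
    metric_of_system n D v g0 /\ flat n D g0.

Definition vhat (v : nat -> fn) (B A N M : fn) (i : nat) : fn :=
  fun u => (B u * v i u - A u) / (M u - N u * v i u).

Definition ghat (v g : nat -> fn) (B A N M : fn) (i : nat) : fn :=
  fun u => ((M u - N u * v i u) / (B u * M u - A u * N u)) ^ 2 * g i u.

Definition Hratio (v : nat -> fn) (B A N M : fn) (i : nat) : fn :=
  fun u => (B u * M u - A u * N u) / (M u - N u * v i u).

Definition lap_i (n : nat) (g : nat -> fn) (i : nat) (f : fn) : fn :=
  fun u => / g i u * (pd i (pd i f) u - sumR n (fun m => Gamma g m i i u * pd m f u)).

Definition gradsq (n : nat) (g : nat -> fn) (f : fn) : fn :=
  fun u => sumR n (fun m => / g m u * (pd m f u) ^ 2).

Definition gradprod (n : nat) (g : nat -> fn) (f h : fn) : fn :=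
  fun u => sumR n (fun m => / g m u * pd m f u * pd m h u).

(* Main.v *)
Require Import Defs.
From Stdlib Require Import Reals List Arith.
From Stdlib Require Import Lra Lia ClassicalEpsilon FunctionalExtensionality PropExtensionality.
Import ListNotations.
Open Scope R_scope.

Lemma upd_same (u : pt) i : upd u i (u i) = u.
Proof. apply functional_extensionality; intro j; unfold upd.
  destruct (Nat.eqb_spec j i); subst; auto. Qed.

Lemma upd_eq u i t : upd u i t i = t.
Proof. unfold upd; rewrite Nat.eqb_refl; auto. Qed.

Lemma upd_neq u i t j : j <> i -> upd u i t j = u j.
Proof. intro H; unfold upd; apply Nat.eqb_neq in H; rewrite H; auto. Qed.

Lemma pd_spec i f u l : derivable_pt_lim (fun t => f (upd u i t)) (u i) l -> pd i f u = l.
Proof.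
  intro H. unfold pd.
  assert (E : exists l, derivable_pt_lim (fun t => f (upd u i t)) (u i) l) by eauto.
  pose proof (epsilon_spec (inhabits 0) _ E) as H2.
  eapply uniqueness_limite; eauto.
Qed.

Lemma ex_pd_spec i f u : ex_pd i f u -> derivable_pt_lim (fun t => f (upd u i t)) (u i) (pd i f u).
Proof. intros [l H]. rewrite (pd_spec _ _ _ _ H). exact H. Qed.

Lemma dpl_local f g x l d : d > 0 -> (forall t, Rabs (t - x) < d -> f t = g t) ->
  derivable_pt_lim f x l -> derivable_pt_lim g x l.
Proof.
  intros Hd Hfg H eps Heps. destruct (H eps Heps) as [del Hdel].
  assert (Hm : 0 < Rmin del d) by (apply Rmin_pos; [apply cond_pos| lra]).
  exists (mkposreal _ Hm). intros h Hh0 Hh. simpl in Hh.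
  rewrite <- !Hfg. apply Hdel; auto. apply Rlt_le_trans with (1:=Hh); apply Rmin_l.
  unfold Rminus; rewrite Rplus_opp_r, Rabs_R0; lra.
  replace (x + h - x) with h by ring. apply Rlt_le_trans with (1:=Hh); apply Rmin_r.
Qed.

Lemma pd_local_gen i f g u d : d > 0 ->
  (forall t, Rabs (t - u i) < d -> f (upd u i t) = g (upd u i t)) -> pd i f u = pd i g u.
Proof.
  intros Hd H. unfold pd. f_equal. apply functional_extensionality; intro l.
  apply propositional_extensionality; split; apply dpl_local with d; auto.
  intros; symmetry; auto.
Qed.

Lemma near_upd n u i t d : (i < n)%nat -> Rabs (t - u i) < d -> d > 0 -> near n u d (upd u i t).
Proof.
  intros Hi Ht Hd; split.
  - intros j Hj. destruct (Nat.eq_dec j i). subst. rewrite upd_eq; auto.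
    rewrite upd_neq; auto. unfold Rminus; rewrite Rplus_opp_r, Rabs_R0; lra.
  - intros j Hj. apply upd_neq. lia.
Qed.

Lemma pd_local n D i f g u : open_dom n D -> D u -> (i < n)%nat ->
  (forall u', D u' -> f u' = g u') -> pd i f u = pd i g u.
Proof.
  intros HD Du Hi H. destruct (HD u Du) as [d [Hd Hd2]].
  apply pd_local_gen with d; auto. intros t Ht. apply H, Hd2, near_upd; auto.
Qed.

Lemma pd_ext i f g u : (forall u', f u' = g u') -> pd i f u = pd i g u.
Proof. intro H. replace f with g; auto. apply functional_extensionality; intro; auto. Qed.

Lemma dl_const (c x : R) : derivable_pt_lim (fun _ => c) x 0.
Proof. apply (derivable_pt_lim_const c x). Qed.
Lemma dl_plus f g x lf lg : derivable_pt_lim f x lf -> derivable_pt_lim g x lg ->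
  derivable_pt_lim (fun t => f t + g t) x (lf + lg).
Proof. intros; apply (derivable_pt_lim_plus f g); auto. Qed.
Lemma dl_minus f g x lf lg : derivable_pt_lim f x lf -> derivable_pt_lim g x lg ->
  derivable_pt_lim (fun t => f t - g t) x (lf - lg).
Proof. intros; apply (derivable_pt_lim_minus f g); auto. Qed.
Lemma dl_mult f g x lf lg : derivable_pt_lim f x lf -> derivable_pt_lim g x lg ->
  derivable_pt_lim (fun t => f t * g t) x (lf * g x + f x * lg).
Proof. intros; apply (derivable_pt_lim_mult f g); auto. Qed.
Lemma dl_opp f x lf : derivable_pt_lim f x lf -> derivable_pt_lim (fun t => - f t) x (- lf).
Proof. intros; apply (derivable_pt_lim_opp f); auto. Qed.
Lemma dl_div f g x lf lg : derivable_pt_lim f x lf -> derivable_pt_lim g x lg -> g x <> 0 ->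
  derivable_pt_lim (fun t => f t / g t) x ((lf * g x - lg * f x) / (g x)²).
Proof. intros; apply (derivable_pt_lim_div f g); auto. Qed.
Lemma dl_inv g x lg : derivable_pt_lim g x lg -> g x <> 0 ->
  derivable_pt_lim (fun t => / g t) x ((0 * g x - lg * 1) / (g x)²).
Proof. intros H1 H2. apply dpl_local with (f := fun t => 1 / g t) (d := 1). lra.
  intros; unfold Rdiv; ring. apply (dl_div (fun _ => 1) g); auto. apply dl_const. Qed.
Lemma dl_pow2 f x lf : derivable_pt_lim f x lf -> derivable_pt_lim (fun t => f t ^ 2) x (lf * f x + f x * lf).
Proof. intro H. apply dpl_local with (f := fun t => f t * f t) (d := 1). lra.
  intros; ring. apply (dl_mult f f); auto. Qed.
Lemma dl_atom i (X : fn) u : ex_pd i X u -> derivable_pt_lim (fun t => X (upd u i t)) (u i) (pd i X u).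
Proof. apply ex_pd_spec. Qed.

Ltac dl := match goal with
  | |- derivable_pt_lim (fun t => @?a t + @?b t) _ _ => eapply dl_plus; [dl | dl]
  | |- derivable_pt_lim (fun t => @?a t - @?b t) _ _ => eapply dl_minus; [dl | dl]
  | |- derivable_pt_lim (fun t => @?a t / @?b t) _ _ => eapply dl_div; [dl | dl | idtac]
  | |- derivable_pt_lim (fun t => @?a t * @?b t) _ _ => eapply dl_mult; [dl | dl]
  | |- derivable_pt_lim (fun t => / @?b t) _ _ => eapply dl_inv; [dl | idtac]
  | |- derivable_pt_lim (fun t => - @?a t) _ _ => eapply dl_opp; [dl]
  | |- derivable_pt_lim (fun t => @?a t ^ 2) _ _ => eapply dl_pow2; [dl]
  | |- derivable_pt_lim (fun t => ?X (upd _ _ t)) _ _ => eapply dl_atom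
  | |- derivable_pt_lim (fun t => ?c) _ _ => apply dl_const
  end.

Ltac dlfin := cbv beta; rewrite ?upd_same.

Lemma ex_of_dl i f u l : derivable_pt_lim (fun t => f (upd u i t)) (u i) l -> ex_pd i f u.
Proof. intro H; exists l; exact H. Qed.

Lemma sm_ex n D X u i : smooth n D X -> D u -> (i < n)%nat -> ex_pd i X u.
Proof. intros H Du Hi. apply (proj2 (H [] (Forall_nil _) u Du)); auto. Qed.

Lemma sm_ex2 n D X u i j : smooth n D X -> D u -> (i < n)%nat -> (j < n)%nat -> ex_pd i (pd j X) u.
Proof. intros H Du Hi Hj. apply (proj2 (H [j] (Forall_cons (P:=fun i => (i < n)%nat) j Hj (Forall_nil _)) u Du)); auto. Qed.

Lemma pd_const i (c : R) u : pd i (fun _ => c) u = 0.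
Proof. apply pd_spec, dl_const. Qed.

Lemma sumR_S n f : sumR (S n) f = sumR n f + f n.
Proof. unfold sumR. rewrite seq_S, fold_right_app. simpl.
  generalize (f n). induction (seq 0 n); intros; simpl. ring. rewrite IHl. ring. Qed.

Lemma sumR_ext n f g : (forall m, (m < n)%nat -> f m = g m) -> sumR n f = sumR n g.
Proof. induction n; intros H. reflexivity. rewrite !sumR_S, IHn, H; auto. Qed.

Lemma sumR_plus n f g : sumR n (fun m => f m + g m) = sumR n f + sumR n g.
Proof. induction n. unfold sumR; simpl; ring. rewrite !sumR_S, IHn. ring. Qed.

Lemma sumR_scal n c f : sumR n (fun m => c * f m) = c * sumR n f.
Proof. induction n. unfold sumR; simpl; ring. rewrite !sumR_S, IHn. ring. Qed.

Lemma sumR_zero n f : (forall m, (m < n)%nat -> f m = 0) -> sumR n f = 0.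
Proof. intro H. rewrite (sumR_ext n f (fun _ => 0 * 0)) by (intros; rewrite H; auto; ring).
  rewrite (sumR_scal n 0 (fun _ => 0)). ring. Qed.

Lemma sumR_ind n a c : (a < n)%nat -> sumR n (fun m => if Nat.eqb m a then c else 0) = c.
Proof. induction n; intro H. lia. rewrite sumR_S. destruct (Nat.eq_dec a n).
  - subst. rewrite Nat.eqb_refl. rewrite sumR_zero. ring. intros m Hm.
    destruct (Nat.eqb_spec m n); [lia|auto].
  - rewrite IHn by lia. destruct (Nat.eqb_spec n a); [lia|ring]. Qed.

Definition lincomb (fs : list (R * (nat -> R))) (m : nat) : R :=
  fold_right (fun p acc => fst p * snd p m + acc) 0 fs.

Lemma sumR_lincomb n fs : sumR n (lincomb fs) = fold_right (fun p acc => fst p * sumR n (snd p) + acc) 0 fs.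
Proof. induction fs as [|[c f] fs IH]; simpl.
  - apply sumR_zero; auto.
  - unfold lincomb; simpl. rewrite (sumR_plus n (fun m => c * f m)). rewrite sumR_scal.
    fold (lincomb fs). rewrite IH. auto. Qed.

Definition rest2 (i k : nat) (f : nat -> R) : nat -> R :=
  fun m => if orb (Nat.eqb m i) (Nat.eqb m k) then 0 else f m.

Lemma sumR_split2 n i k f : (i < n)%nat -> (k < n)%nat -> i <> k ->
  sumR n f = f i + f k + sumR n (rest2 i k f).
Proof. intros Hi Hk Hik.
  rewrite (sumR_ext n f (fun m => 1 * (if Nat.eqb m i then f i else 0) + (1 * (if Nat.eqb m k then f k else 0) + (1 * rest2 i k f m + 0)))).
  2:{ intros m Hm. unfold rest2. destruct (Nat.eqb_spec m i); destruct (Nat.eqb_spec m k); subst; simpl; try lia; ring. }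
  change (sumR n (lincomb [(1, fun m => if Nat.eqb m i then f i else 0); (1, fun m => if Nat.eqb m k then f k else 0); (1, rest2 i k f)]) = f i + f k + sumR n (rest2 i k f)).
  rewrite sumR_lincomb. simpl. rewrite !sumR_ind; auto. ring. Qed.

Lemma sumR_pick3 n a b c f : (a < n)%nat -> (b < n)%nat -> (c < n)%nat -> a <> b -> a <> c -> b <> c ->
  (forall m, (m < n)%nat -> m <> a -> m <> b -> m <> c -> f m = 0) ->
  sumR n f = f a + f b + f c.
Proof. intros Ha Hb Hc Hab Hac Hbc H.
  rewrite (sumR_ext n f (fun m => 1 * (if Nat.eqb m a then f a else 0) + (1 * (if Nat.eqb m b then f b else 0) + (1 * (if Nat.eqb m c then f c else 0) + 0)))).
  2:{ intros m Hm. destruct (Nat.eqb_spec m a); destruct (Nat.eqb_spec m b); destruct (Nat.eqb_spec m c); subst; try lia; try ring. rewrite H; auto; ring. }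
  change (sumR n (lincomb [(1, fun m => if Nat.eqb m a then f a else 0); (1, fun m => if Nat.eqb m b then f b else 0); (1, fun m => if Nat.eqb m c then f c else 0)]) = f a + f b + f c).
  rewrite sumR_lincomb. simpl. rewrite !sumR_ind; auto. ring. Qed.


Definition ap (v g : nat -> fn) (B A N M : fn) (j i : nat) : fn :=
  fun u => (v j u - v i u) * (pd j N u - N u * dlnH g j i u) / (M u - N u * v i u)
    - (pd j B u * (M u - N u * v j u) + pd j N u * (B u * v j u - A u)) / (B u * M u - A u * N u).

Lemma pd_g_eta g j i u : g i u <> 0 -> pd j (g i) u = 2 * g i u * dlnH g j i u.
Proof. intro H; unfold dlnH; field; auto. Qed.

Lemma gh_dlnH (v g : nat -> fn) (B A N M : fn) j i u :
  ex_pd j M u -> ex_pd j N u -> ex_pd j (v i) u -> ex_pd j B u -> ex_pd j A u -> ex_pd j (g i) u ->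
  pd j M u = v j u * pd j N u -> pd j A u = v j u * pd j B u ->
  dlnH g j i u = pd j (v i) u / (v j u - v i u) ->
  g i u <> 0 -> M u - N u * v i u <> 0 -> B u * M u - A u * N u <> 0 -> v j u - v i u <> 0 ->
  dlnH (ghat v g B A N M) j i u = dlnH g j i u + ap v g B A N M j i u.
Proof.
  intros eM eN ev eB eA eg HM HA HL Hg Hp HD Hv.
  unfold dlnH at 1. unfold ghat. erewrite pd_spec. 2:{ cbv beta; dl; auto. all: dlfin; auto. }
  dlfin. rewrite HM, HA. unfold ap.
  assert (Hv2 : pd j (v i) u = (v j u - v i u) * dlnH g j i u) by (rewrite HL; field; auto).
  rewrite Hv2, (pd_g_eta g j i u Hg). set (e := dlnH g j i u). unfold Rsqr. field. auto.
Qed.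

Definition apd (v g : nat -> fn) (B A N M : fn) (i : nat) : fn :=
  fun u => - N u * pd i (v i) u / (M u - N u * v i u)
    - (pd i B u * (M u - N u * v i u) + pd i N u * (B u * v i u - A u)) / (B u * M u - A u * N u).

Lemma gh_dlnH_d (v g : nat -> fn) (B A N M : fn) i u :
  ex_pd i M u -> ex_pd i N u -> ex_pd i (v i) u -> ex_pd i B u -> ex_pd i A u -> ex_pd i (g i) u ->
  pd i M u = v i u * pd i N u -> pd i A u = v i u * pd i B u ->
  g i u <> 0 -> M u - N u * v i u <> 0 -> B u * M u - A u * N u <> 0 ->
  dlnH (ghat v g B A N M) i i u = dlnH g i i u + apd v g B A N M i u.
Proof.
  intros eM eN ev eB eA eg HM HA Hg Hp HD.
  unfold dlnH at 1. unfold ghat. erewrite pd_spec. 2:{ cbv beta; dl; auto. all: dlfin; auto. }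
  dlfin. rewrite HM, HA. unfold apd.
  rewrite (pd_g_eta g i i u Hg). set (e := dlnH g i i u). unfold Rsqr. field. auto.
Qed.

Ltac eqbs := repeat (rewrite Nat.eqb_refl || match goal with
  |- context [Nat.eqb ?a ?b] => let H := fresh in destruct (Nat.eqb_spec a b) as [H|H]; [subst; try lia|] end).

Ltac pdlam := repeat match goal with |- context [pd ?l (fun x => @?b x) ?u] =>
  erewrite (pd_spec l (fun x => b x) u); [| cbv beta; dl; auto; dlfin; auto] end; dlfin.

Definition eta (G : nat -> fn) (a b : nat) : fn := dlnH G b a.

Lemma Gamma_eq G m j k u : G m u <> 0 -> G j u <> 0 ->
  Gamma G m j k u = (if Nat.eqb m k then eta G m j u else 0) + (if Nat.eqb m j then eta G m k u else 0)
     - (if Nat.eqb j k then G j u / G m u * eta G j m u else 0).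
Proof. intros H1 H2. unfold Gamma, eta, dlnH.
  destruct (Nat.eqb_spec m k); destruct (Nat.eqb_spec m j); destruct (Nat.eqb_spec j k); subst; field; auto. Qed.

Lemma Gamma_zero G a b c u : a <> b -> a <> c -> b <> c -> Gamma G a b c u = 0.
Proof. intros. unfold Gamma. eqbs. ring. Qed.

Lemma Gamma_iij G i j : Gamma G i i j = dlnH G j i.
Proof. apply functional_extensionality; intro u. unfold Gamma, dlnH. eqbs; unfold Rdiv; ring. Qed.

Lemma Gamma_lil G i l : Gamma G i l i = dlnH G l i.
Proof. apply functional_extensionality; intro u. unfold Gamma, dlnH. eqbs; unfold Rdiv; ring. Qed.

Lemma Riem_b n G i j l u : (i < n)%nat -> (j < n)%nat -> (l < n)%nat -> i <> j -> i <> l -> j <> l ->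
  (forall m, (m < n)%nat -> G m u <> 0) ->
  Riem n G i j i l u = - pd l (dlnH G j i) u - eta G i l u * eta G i j u + eta G i j u * eta G j l u
     + eta G i l u * eta G l j u.
Proof.
  intros Hi Hj Hl Hij Hil Hjl HG. unfold Riem.
  rewrite (pd_ext i (Gamma G i l j) (fun _ => 0)) by (intro; apply Gamma_zero; auto).
  rewrite pd_const, Gamma_iij.
  rewrite (sumR_pick3 n i j l) by (auto; intros m Hm H1 H2 H3;
     rewrite !Gamma_eq by auto; eqbs; ring).
  rewrite !Gamma_eq by auto. eqbs. field; auto.
Qed.

Lemma Riem_c n G i j l u : (i < n)%nat -> (j < n)%nat -> (l < n)%nat -> i <> j -> i <> l -> j <> l ->
  (forall m, (m < n)%nat -> G m u <> 0) ->
  ex_pd l (G i) u -> ex_pd l (G j) u -> ex_pd l (pd i (G j)) u ->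
  Riem n G i j j l u = - (G j u / G i u) * Riem n G j i j l u.
Proof.
  intros Hi Hj Hl Hij Hil Hjl HG e1 e2 e3.
  rewrite (Riem_b n G j i l) by auto.
  unfold Riem.
  rewrite (pd_ext j (Gamma G i l j) (fun _ => 0)) by (intro; apply Gamma_zero; auto).
  rewrite pd_const.
  rewrite (sumR_pick3 n i j l) by (auto; intros m Hm H1 H2 H3;
     rewrite !Gamma_eq by auto; eqbs; ring).
  rewrite !Gamma_eq by auto. eqbs.
  unfold Gamma at 1. eqbs. unfold dlnH at 1. pdlam.
  rewrite (pd_g_eta G l i u), (pd_g_eta G l j u) by auto.
  unfold eta, dlnH. unfold Rsqr. field. split; auto.
Qed.

Lemma Riem_antisym n G i j k l u : Riem n G i j k l u = - Riem n G i j l k u.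
Proof. unfold Riem.
  rewrite (sumR_ext n (fun m => Gamma G i l m u * Gamma G m k j u - Gamma G i k m u * Gamma G m l j u)
     (fun m => (-1) * (Gamma G i k m u * Gamma G m l j u - Gamma G i l m u * Gamma G m k j u))) by (intros; ring).
  rewrite sumR_scal. ring. Qed.

Lemma Riem_kk n G i j k u : Riem n G i j k k u = 0.
Proof. pose proof (Riem_antisym n G i j k k u). lra. Qed.

Lemma Riem_d n G i j k l u : i <> j -> k <> l -> k <> i -> k <> j -> l <> i -> l <> j ->
  Riem n G i j k l u = 0.
Proof. intros. unfold Riem.
  rewrite (pd_ext k (Gamma G i l j) (fun _ => 0)) by (intro; apply Gamma_zero; auto).
  rewrite (pd_ext l (Gamma G i k j) (fun _ => 0)) by (intro; apply Gamma_zero; auto).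
  rewrite !pd_const. rewrite sumR_zero. ring.
  intros m Hm. destruct (Nat.eq_dec m i). subst.
  rewrite (Gamma_zero G i l j), (Gamma_zero G i k j) by auto. ring.
  destruct (Nat.eq_dec m k). subst.
  rewrite (Gamma_zero G k l j), (Gamma_zero G i l k) by auto. ring.
  destruct (Nat.eq_dec m l). subst.
  rewrite (Gamma_zero G l k j), (Gamma_zero G i k l) by auto. ring.
  rewrite (Gamma_zero G i k m), (Gamma_zero G i l m) by auto. ring.
Qed.

Lemma Riem_e n G i k l u : (forall m, (m < n)%nat -> G m u <> 0) -> (i < n)%nat -> (k < n)%nat -> (l < n)%nat ->
  ex_pd k (G i) u -> ex_pd l (G i) u -> ex_pd k (pd l (G i)) u -> ex_pd l (pd k (G i)) u ->
  pd k (pd l (G i)) u = pd l (pd k (G i)) u ->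
  Riem n G i i k l u = 0.
Proof. intros HG Hi Hk Hl e1 e2 e3 e4 Hs. unfold Riem. rewrite !Gamma_lil.
  rewrite sumR_zero.
  2:{ intros m Hm. rewrite !Gamma_eq by auto. eqbs; field; auto. }
  unfold dlnH. pdlam. rewrite Hs. unfold Rsqr. field. auto. Qed.


Definition w2 (u : pt) k l s t : pt := upd (upd u k s) l t.

Lemma w2_k u k l s t : k <> l -> w2 u k l s t k = s.
Proof. intro H; unfold w2. rewrite upd_neq by auto. apply upd_eq. Qed.
Lemma w2_l u k l s t : w2 u k l s t l = t.
Proof. unfold w2; apply upd_eq. Qed.
Lemma w2_updk u k l s t s' : k <> l -> upd (w2 u k l s t) k s' = w2 u k l s' t.
Proof. intro H. apply functional_extensionality; intro j. unfold w2, upd.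
  destruct (Nat.eqb_spec j k); destruct (Nat.eqb_spec j l); subst; auto; lia. Qed.
Lemma w2_updl u k l s t t' : upd (w2 u k l s t) l t' = w2 u k l s t'.
Proof. apply functional_extensionality; intro j. unfold w2, upd.
  destruct (Nat.eqb_spec j k); destruct (Nat.eqb_spec j l); subst; auto. Qed.

Lemma w2_near n u k l s t d : (k < n)%nat -> (l < n)%nat -> k <> l -> d > 0 ->
  Rabs (s - u k) < d -> Rabs (t - u l) < d -> near n u d (w2 u k l s t).
Proof. intros Hk Hl Hkl Hd Hs Ht. split.
  - intros j Hj. unfold w2, upd. destruct (Nat.eqb_spec j l); subst; auto.
    destruct (Nat.eqb_spec j k); subst; auto. unfold Rminus; rewrite Rplus_opp_r, Rabs_R0; lra.
  - intros j Hj. unfold w2, upd. destruct (Nat.eqb_spec j l); [lia|]. destruct (Nat.eqb_spec j k); [lia|auto].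
Qed.

Lemma dk_w2 Y u k l s t : k <> l -> ex_pd k Y (w2 u k l s t) ->
  derivable_pt_lim (fun s' => Y (w2 u k l s' t)) s (pd k Y (w2 u k l s t)).
Proof. intros H e. pose proof (ex_pd_spec _ _ _ e) as H1. rewrite w2_k in H1 by auto.
  replace (fun s' => Y (w2 u k l s' t)) with (fun t' => Y (upd (w2 u k l s t) k t')); auto.
  apply functional_extensionality; intro; rewrite w2_updk; auto. Qed.

Lemma dl_w2 Y u k l s t : ex_pd l Y (w2 u k l s t) ->
  derivable_pt_lim (fun t' => Y (w2 u k l s t')) t (pd l Y (w2 u k l s t)).
Proof. intros e. pose proof (ex_pd_spec _ _ _ e) as H1. rewrite w2_l in H1.
  replace (fun t' => Y (w2 u k l s t')) with (fun t' => Y (upd (w2 u k l s t) l t')); auto.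
  apply functional_extensionality; intro; rewrite w2_updl; auto. Qed.

Lemma w2_base u k l : w2 u k l (u k) (u l) = u.
Proof. unfold w2. rewrite upd_same. apply upd_same. Qed.

Lemma schwarz n D X u k l : open_dom n D -> smooth n D X -> D u -> (k < n)%nat -> (l < n)%nat ->
  pd k (pd l X) u = pd l (pd k X) u.
Proof.
  intros HD HX Du Hk Hl. destruct (Nat.eq_dec k l) as [->|Hkl]; [reflexivity|].
  destruct (HD u Du) as [d0 [Hd0 Hd0D]].
  set (c1 := pd l (pd k X) u). set (c2 := pd k (pd l X) u).
  destruct (Req_dec c2 c1) as [E|NE]; [exact E|exfalso].
  set (eps := Rabs (c1 - c2) / 2).
  assert (Heps : eps > 0) by (unfold eps; apply Rdiv_lt_0_compat; [apply Rabs_pos_lt; lra | lra]).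
  assert (F2 : forall a b, (a<n)%nat -> (b<n)%nat -> Forall (fun i => (i<n)%nat) [a;b]) by (intros; repeat constructor; auto).
  destruct (proj1 (HX [l; k] (F2 l k Hl Hk) u Du) eps Heps) as [d1 [Hd1 C1]].
  destruct (proj1 (HX [k; l] (F2 k l Hk Hl) u Du) eps Heps) as [d2 [Hd2 C2]].
  simpl in C1, C2.
  set (h := Rmin d0 (Rmin d1 d2) / 2).
  assert (Hm : 0 < Rmin d0 (Rmin d1 d2)) by (repeat apply Rmin_pos; lra).
  assert (Hh : 0 < h) by (unfold h; lra).
  assert (Hh0 : h < d0) by (unfold h; pose proof (Rmin_l d0 (Rmin d1 d2)); lra).
  assert (Hh1 : h < d1) by (unfold h; pose proof (Rmin_r d0 (Rmin d1 d2)); pose proof (Rmin_l d1 d2); lra).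
  assert (Hh2 : h < d2) by (unfold h; pose proof (Rmin_r d0 (Rmin d1 d2)); pose proof (Rmin_r d1 d2); lra).
  set (a := u k). set (b := u l).
  set (W := w2 u k l).
  assert (HW : forall s t, a <= s <= a + h -> b <= t <= b + h -> forall d, h < d -> near n u d (W s t)).
  { intros s t Hs Ht d Hd. apply w2_near; auto; try lra.
    unfold a in Hs; rewrite Rabs_right; lra. unfold b in Ht; rewrite Rabs_right; lra. }
  assert (HWD : forall s t, a <= s <= a + h -> b <= t <= b + h -> D (W s t)).
  { intros; apply Hd0D, HW; auto. }
  assert (EX : forall s t, a <= s <= a + h -> b <= t <= b + h ->
     ex_pd k X (W s t) /\ ex_pd l X (W s t) /\ ex_pd l (pd k X) (W s t) /\ ex_pd k (pd l X) (W s t)).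
  { intros s t Hs Ht. pose proof (HWD s t Hs Ht) as DW. repeat split.
    apply (sm_ex n D); auto. apply (sm_ex n D); auto. apply (sm_ex2 n D); auto. apply (sm_ex2 n D); auto. }
  set (Delta := X (W (a+h) (b+h)) - X (W (a+h) b) - X (W a (b+h)) + X (W a b)).
  assert (W1 : exists s t, a <= s <= a + h /\ b <= t <= b + h /\ Delta = h * h * pd l (pd k X) (W s t)).
  { destruct (MVT_cor2 (fun s => X (W s (b+h)) - X (W s b)) (fun s => pd k X (W s (b+h)) - pd k X (W s b)) a (a+h))
      as [xi [Rxi Hxi]]; [lra| |]; cbv beta in *.
    { intros c Hc. apply dl_minus; apply dk_w2; auto; apply EX; auto; lra. }
    destruct (MVT_cor2 (fun t => pd k X (W xi t)) (fun t => pd l (pd k X) (W xi t)) b (b+h))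
      as [et [Ret Het]]; [lra| |]; cbv beta in *.
    { intros c Hc. apply dl_w2; apply EX; auto; lra. }
    exists xi, et. split; [lra|split; [lra|]]. unfold Delta.
    replace (X (W (a + h) (b + h)) - X (W (a + h) b) - X (W a (b + h)) + X (W a b)) with
      ((X (W (a + h) (b + h)) - X (W (a + h) b)) - (X (W a (b + h)) - X (W a b))) by ring.
    rewrite Rxi, Ret. ring. }
  assert (W2 : exists s t, a <= s <= a + h /\ b <= t <= b + h /\ Delta = h * h * pd k (pd l X) (W s t)).
  { destruct (MVT_cor2 (fun t => X (W (a+h) t) - X (W a t)) (fun t => pd l X (W (a+h) t) - pd l X (W a t)) b (b+h))
      as [et [Ret Het]]; [lra| |]; cbv beta in *.
    { intros c Hc. apply dl_minus; apply dl_w2; auto; apply EX; auto; lra. }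
    destruct (MVT_cor2 (fun s => pd l X (W s et)) (fun s => pd k (pd l X) (W s et)) a (a+h))
      as [xi [Rxi Hxi]]; [lra| |]; cbv beta in *.
    { intros c Hc. apply dk_w2; auto; apply EX; auto; lra. }
    exists xi, et. split; [lra|split; [lra|]]. unfold Delta.
    replace (X (W (a + h) (b + h)) - X (W (a + h) b) - X (W a (b + h)) + X (W a b)) with
      ((X (W (a + h) (b + h)) - X (W a (b + h))) - (X (W (a + h) b) - X (W a b))) by ring.
    rewrite Ret, Rxi. ring. }
  destruct W1 as [s1 [t1 [Hs1 [Ht1 E1]]]]. destruct W2 as [s2 [t2 [Hs2 [Ht2 E2]]]].
  specialize (C1 (W s1 t1) (HW s1 t1 Hs1 Ht1 d1 Hh1) (HWD s1 t1 Hs1 Ht1)).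
  specialize (C2 (W s2 t2) (HW s2 t2 Hs2 Ht2 d2 Hh2) (HWD s2 t2 Hs2 Ht2)).
  fold c1 in C1. fold c2 in C2.
  assert (Eq : pd l (pd k X) (W s1 t1) = pd k (pd l X) (W s2 t2)).
  { apply Rmult_eq_reg_l with (h * h). lra. apply Rgt_not_eq. nra. }
  rewrite Eq in C1.
  assert (Rabs (c1 - c2) < 2 * eps).
  { replace (c1 - c2) with (-(pd k (pd l X) (W s2 t2) - c1) + (pd k (pd l X) (W s2 t2) - c2)) by ring.
    eapply Rle_lt_trans. apply Rabs_triang. rewrite Rabs_Ropp. lra. }
  unfold eps in H. lra.
Qed.


Lemma lame_v n D v g j i u : metric_of_system n D v g -> strictly_hyperbolic n D v ->
  (i < n)%nat -> (j < n)%nat -> i <> j -> D u ->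
  pd j (v i) u = (v j u - v i u) * dlnH g j i u.
Proof. intros [_ Hg] Hh Hi Hj Hij Du. rewrite (Hg i j u) by auto.
  field. intro. apply (Hh j i u); auto. lra. Qed.

Lemma gh_nz n D v g B A N M m u : metric_of_system n D v g -> (m < n)%nat -> D u ->
  (forall u, D u -> B u * M u - A u * N u <> 0) ->
  (forall i u, (i < n)%nat -> D u -> M u - N u * v i u <> 0) ->
  ghat v g B A N M m u <> 0.
Proof. intros [Hnd _] Hm Du H1 H2. unfold ghat.
  apply Rmult_integral_contrapositive_currified. apply pow_nonzero.
  unfold Rdiv. apply Rmult_integral_contrapositive_currified; auto. apply Rinv_neq_0_compat; auto.
  apply Hnd; auto. Qed.

Lemma ex_dlnH n D g j i l u : (forall i, (i < n)%nat -> smooth n D (g i)) -> D u ->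
  (i < n)%nat -> (j < n)%nat -> (l < n)%nat -> g i u <> 0 -> ex_pd l (dlnH g j i) u.
Proof. intros Hs Du Hi Hj Hl Hg. unfold dlnH. eapply ex_of_dl. cbv beta; dl.
  all: try solve [apply (sm_ex2 n D); auto]. all: try solve [apply (sm_ex n D); auto].
  dlfin. apply Rmult_integral_contrapositive_currified; [lra|auto]. Qed.


Lemma tsarev n D v g B A j l u : open_dom n D -> (forall i, (i < n)%nat -> smooth n D (v i)) ->
  smooth n D B -> smooth n D A -> metric_of_system n D v g -> strictly_hyperbolic n D v ->
  conservation_law n D v B A -> (j < n)%nat -> (l < n)%nat -> j <> l -> D u ->
  pd l (pd j B) u = dlnH g j l u * pd l B u + dlnH g l j u * pd j B u.
Proof. intros HD Hvs HB HA Hg Hh HBA Hj Hl Hjl Du.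
  pose proof (schwarz n D A u l j HD HA Du Hl Hj) as S1.
  pose proof (schwarz n D B u l j HD HB Du Hl Hj) as S2.
  rewrite (pd_local n D l (pd j A) (fun u' => v j u' * pd j B u')) in S1 by (auto; intros; apply HBA; auto).
  rewrite (pd_local n D j (pd l A) (fun u' => v l u' * pd l B u')) in S1 by (auto; intros; apply HBA; auto).
  erewrite (pd_spec l (fun u' => v j u' * pd j B u') u) in S1 by (cbv beta; dl; [apply (sm_ex n D); auto | apply (sm_ex2 n D); auto]).
  erewrite (pd_spec j (fun u' => v l u' * pd l B u') u) in S1 by (cbv beta; dl; [apply (sm_ex n D); auto | apply (sm_ex2 n D); auto]).
  rewrite !upd_same in S1. rewrite (lame_v n D v g l j u), (lame_v n D v g j l u) in S1 by auto.
  rewrite <- S2 in S1.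
  assert (Hv : v j u - v l u <> 0) by (intro; apply (Hh j l u); auto; lra).
  apply Rmult_eq_reg_l with (v j u - v l u); auto. lra.
Qed.

Lemma part2b (n : nat) (D : pt -> Prop) (v g : nat -> fn) (B A N M : fn)
  (HD : open_dom n D)
  (Hsm_v : forall i, (i < n)%nat -> smooth n D (v i))
  (Hsm_g : forall i, (i < n)%nat -> smooth n D (g i))
  (Hsm_B : smooth n D B) (Hsm_A : smooth n D A)
  (Hsm_N : smooth n D N) (Hsm_M : smooth n D M)
  (Hhyp : strictly_hyperbolic n D v)
  (HDN : DN_system n D v)
  (Hg : metric_of_system n D v g)
  (HBA : conservation_law n D v B A)
  (HNM : conservation_law n D v N M)
  (Hdet : forall u, D u -> B u * M u - A u * N u <> 0)
  (Hden : forall i u, (i < n)%nat -> D u -> M u - N u * v i u <> 0)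
  i j l u : (i < n)%nat -> (j < n)%nat -> (l < n)%nat -> i <> j -> i <> l -> j <> l -> D u ->
  Riem n (ghat v g B A N M) i j i l u = 0.
Proof.
  intros Hi Hj Hl Hij Hil Hjl Du.
  assert (Hgnz : forall m u, (m < n)%nat -> D u -> g m u <> 0) by (intros; apply (proj1 Hg); auto).
  assert (Hvd : forall a b u, (a < n)%nat -> (b < n)%nat -> a <> b -> D u -> v a u - v b u <> 0)
    by (intros a b u' Ha Hb Hab Du'; intro; apply (Hhyp a b u'); auto; lra).
  assert (HE1 : forall a b u', (a < n)%nat -> (b < n)%nat -> a <> b -> D u' ->
     dlnH (ghat v g B A N M) b a u' = dlnH g b a u' + ap v g B A N M b a u').
  { intros a b u' Ha Hb Hab Du'. apply gh_dlnH; auto; try solve [apply (sm_ex n D); auto].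
    all: try (apply (proj2 Hg); auto). all: try (apply Hvd; auto). }
  destruct HDN as [g0 [Hsm0 [Hg0 Hfl0]]].
  assert (Hg0nz : forall m u, (m < n)%nat -> D u -> g0 m u <> 0) by (intros; apply (proj1 Hg0); auto).
  assert (Heq0 : forall a b u', (a < n)%nat -> (b < n)%nat -> a <> b -> D u' -> dlnH g0 b a u' = dlnH g b a u').
  { intros a b u' Ha Hb Hab Du'. rewrite (proj2 Hg0), (proj2 Hg); auto. }
  assert (R0 : forall a b c, (a < n)%nat -> (b < n)%nat -> (c < n)%nat -> a <> b -> a <> c -> b <> c ->
     pd c (dlnH g b a) u = - eta g a c u * eta g a b u + eta g a b u * eta g b c u + eta g a c u * eta g c b u).
  { intros a b c Ha Hb Hc Hab Hac Hbc.
    pose proof (Riem_b n g0 a b c u Ha Hb Hc Hab Hac Hbc (fun m Hm => Hg0nz m u Hm Du)) as Hr.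
    rewrite (Hfl0 a b a c u) in Hr by auto.
    rewrite (pd_local n D c (dlnH g0 b a) (dlnH g b a)) in Hr by (auto; intros; apply Heq0; auto).
    unfold eta in *. rewrite !Heq0 in Hr by auto. lra. }
  rewrite (Riem_b n _ i j l u) by (auto; intros; apply (gh_nz n D); auto).
  unfold eta. rewrite !HE1 by auto.
  rewrite (pd_local n D l _ (fun u' => dlnH g j i u' + ap v g B A N M j i u')) by (auto; intros; apply HE1; auto).
  unfold ap.
  erewrite (pd_spec l _ u). 2:{ cbv beta; dl; auto. all: try solve [apply (sm_ex2 n D); auto]. all: try solve [apply (sm_ex n D); auto].
     all: try solve [apply (ex_dlnH n D); auto]. all: dlfin; auto. }
  dlfin.
  rewrite (HNM l u), (HBA l u) by auto.
  rewrite (lame_v n D v g l j u), (lame_v n D v g l i u) by auto.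
  rewrite (R0 i j l) by auto.
  rewrite (tsarev n D v g N M j l u), (tsarev n D v g B A j l u) by auto.
  try rewrite (HNM j u) by auto; try rewrite (HBA j u) by auto.
  unfold eta.
  set (eij := dlnH g j i u). set (eil := dlnH g l i u). set (ejl := dlnH g l j u). set (elj := dlnH g j l u).
  unfold Rsqr. set (Nl := pd l N u). set (Nj := pd j N u). set (Bl := pd l B u). set (Bj := pd j B u). set (Nlj := pd l (pd j N) u). set (Blj := pd l (pd j B) u). set (vi := v i u). set (vj := v j u). set (vl := v l u). set (BB := B u). set (AA := A u). set (NN := N u). set (MM := M u). field. repeat split; unfold BB, MM, AA, NN, vi, vj, vl; auto. Qed.

Lemma ex_pd_local n D f h l u : open_dom n D -> D u -> (l < n)%nat ->
  (forall u', D u' -> f u' = h u') -> ex_pd l h u -> ex_pd l f u.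
Proof. intros HD Du Hl H [L HL]. exists L. destruct (HD u Du) as [d [Hd Hd2]].
  apply dpl_local with (fun t => h (upd u l t)) d; auto.
  intros t Ht. symmetry. apply H, Hd2, near_upd; auto. Qed.

Definition ghd (v g : nat -> fn) (B A N M : fn) (i j : nat) : fn := fun u =>
  2 * ((M u - N u * v j u) / (B u * M u - A u * N u)) *
  (((pd i M u - (pd i N u * v j u + N u * pd i (v j) u)) * (B u * M u - A u * N u)
    - (M u - N u * v j u) * (pd i B u * M u + B u * pd i M u - (pd i A u * N u + A u * pd i N u)))
    / ((B u * M u - A u * N u) * (B u * M u - A u * N u))) * g j u
  + ((M u - N u * v j u) / (B u * M u - A u * N u)) ^ 2 * pd i (g j) u.

Lemma pd_gh n D v g B A N M i j u : (forall i, (i < n)%nat -> smooth n D (v i)) ->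
  (forall i, (i < n)%nat -> smooth n D (g i)) ->
  smooth n D B -> smooth n D A -> smooth n D N -> smooth n D M ->
  (i < n)%nat -> (j < n)%nat -> D u -> B u * M u - A u * N u <> 0 ->
  pd i (ghat v g B A N M j) u = ghd v g B A N M i j u.
Proof. intros. unfold ghat, ghd. erewrite pd_spec. 2:{ cbv beta; dl; try solve [apply (sm_ex n D); auto]. all: dlfin; auto. }
  dlfin. unfold Rsqr. field. auto. Qed.

Lemma ex_gh n D v g B A N M i j u : (forall i, (i < n)%nat -> smooth n D (v i)) ->
  (forall i, (i < n)%nat -> smooth n D (g i)) ->
  smooth n D B -> smooth n D A -> smooth n D N -> smooth n D M ->
  (i < n)%nat -> (j < n)%nat -> D u -> B u * M u - A u * N u <> 0 ->
  ex_pd i (ghat v g B A N M j) u.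
Proof. intros. unfold ghat. eapply ex_of_dl. cbv beta; dl; try solve [apply (sm_ex n D); auto].
  dlfin. auto. Qed.

Ltac exs n D := first [ solve [apply (sm_ex2 n D); auto] | solve [apply (sm_ex n D); auto] ].

Lemma ex_gh2 n D v g B A N M i j k u : open_dom n D -> (forall i, (i < n)%nat -> smooth n D (v i)) ->
  (forall i, (i < n)%nat -> smooth n D (g i)) ->
  smooth n D B -> smooth n D A -> smooth n D N -> smooth n D M ->
  (i < n)%nat -> (j < n)%nat -> (k < n)%nat -> D u -> (forall u, D u -> B u * M u - A u * N u <> 0) ->
  ex_pd k (pd i (ghat v g B A N M j)) u.
Proof. intros. apply ex_pd_local with n D (ghd v g B A N M i j); auto.
  intros; apply (pd_gh n D); auto.
  unfold ghd. eapply ex_of_dl. cbv beta; dl; try exs n D.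
  all: dlfin; auto. all: apply Rmult_integral_contrapositive_currified; auto. Qed.

Lemma mixed_gh n D v g B A N M j k l u : open_dom n D -> (forall i, (i < n)%nat -> smooth n D (v i)) ->
  (forall i, (i < n)%nat -> smooth n D (g i)) ->
  smooth n D B -> smooth n D A -> smooth n D N -> smooth n D M ->
  (j < n)%nat -> (k < n)%nat -> (l < n)%nat -> D u -> (forall u, D u -> B u * M u - A u * N u <> 0) ->
  pd k (pd l (ghat v g B A N M j)) u = pd l (pd k (ghat v g B A N M j)) u.
Proof. intros HD Hv Hg HB HA HN HM Hj Hk Hl Du Hdet.
  rewrite (pd_local n D k _ (ghd v g B A N M l j)) by (auto; intros; apply (pd_gh n D); auto).
  rewrite (pd_local n D l _ (ghd v g B A N M k j)) by (auto; intros; apply (pd_gh n D); auto).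
  unfold ghd. pdlam.
  all: try exs n D. all: try (dlfin; apply Rmult_integral_contrapositive_currified; auto).
  rewrite !(schwarz n D _ u k l HD) by auto.
  unfold Rsqr. field. auto.
Qed.

Lemma part2 (n : nat) (D : pt -> Prop) (v g : nat -> fn) (B A N M : fn)
  (HD : open_dom n D)
  (Hsm_v : forall i, (i < n)%nat -> smooth n D (v i))
  (Hsm_g : forall i, (i < n)%nat -> smooth n D (g i))
  (Hsm_B : smooth n D B) (Hsm_A : smooth n D A)
  (Hsm_N : smooth n D N) (Hsm_M : smooth n D M)
  (Hhyp : strictly_hyperbolic n D v)
  (HDN : DN_system n D v)
  (Hg : metric_of_system n D v g)
  (HBA : conservation_law n D v B A)
  (HNM : conservation_law n D v N M)
  (Hdet : forall u, D u -> B u * M u - A u * N u <> 0)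
  (Hden : forall i u, (i < n)%nat -> D u -> M u - N u * v i u <> 0)
  i j k l u : (i < n)%nat -> (j < n)%nat -> (k < n)%nat -> (l < n)%nat ->
     D u -> (i = j \/ ~ ((k = i /\ l = j) \/ (k = j /\ l = i))) ->
     Riem n (ghat v g B A N M) i j k l u = 0.
Proof.
  intros Hi Hj Hk Hl Du Hc.
  assert (HG : forall m, (m < n)%nat -> ghat v g B A N M m u <> 0) by (intros; apply (gh_nz n D); auto).
  assert (P2b := part2b n D v g B A N M HD Hsm_v Hsm_g Hsm_B Hsm_A Hsm_N Hsm_M Hhyp HDN Hg HBA HNM Hdet Hden).
  assert (Hcc : forall a b c, (a < n)%nat -> (b < n)%nat -> (c < n)%nat -> a <> b -> a <> c -> b <> c ->
     Riem n (ghat v g B A N M) a b b c u = 0).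
  { intros a b c Ha Hb Hc0 Hab Hac Hbc. rewrite (Riem_c n _ a b c u) by (auto; try (apply (ex_gh n D); auto);
      try (apply (ex_gh2 n D); auto)). rewrite P2b by auto. ring. }
  destruct (Nat.eq_dec i j) as [<-|Hij].
  - apply Riem_e; auto; try (apply (ex_gh n D); auto); try (apply (ex_gh2 n D); auto).
    apply (mixed_gh n D); auto.
  - destruct Hc as [Hc|Hc]; [contradiction|].
    destruct (Nat.eq_dec k l) as [<-|Hkl]. apply Riem_kk.
    destruct (Nat.eq_dec k i) as [->|Hki].
    { apply P2b; auto; intro; subst; tauto. }
    destruct (Nat.eq_dec k j) as [->|Hkj].
    { apply Hcc; auto; intro; subst; tauto. }
    destruct (Nat.eq_dec l i) as [->|Hli].
    { rewrite Riem_antisym, P2b; auto. ring. }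
    destruct (Nat.eq_dec l j) as [->|Hlj].
    { rewrite Riem_antisym, Hcc; auto. ring. }
    apply Riem_d; auto.
Qed.


Lemma part1 (n : nat) (D : pt -> Prop) (v g w1 w2 : nat -> fn)
  (B A N M T1 T2 Z1 Z2 P S : fn)
  (HD : open_dom n D)
  (Hsm_v : forall i, (i < n)%nat -> smooth n D (v i))
  (Hsm_g : forall i, (i < n)%nat -> smooth n D (g i))
  (Hsm_B : smooth n D B) (Hsm_A : smooth n D A)
  (Hsm_N : smooth n D N) (Hsm_M : smooth n D M)
  (Hhyp : strictly_hyperbolic n D v)
  (Hg : metric_of_system n D v g)
  (Hcurv : forall i k u, (i < n)%nat -> (k < n)%nat -> i <> k -> D u ->
     Rik n g i k u = w1 i u + w1 k u + w2 i u * v k u + w2 k u * v i u)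
  (HBA : conservation_law n D v B A)
  (HNM : conservation_law n D v N M)
  (Hdet : forall u, D u -> B u * M u - A u * N u <> 0)
  (Hden : forall i u, (i < n)%nat -> D u -> M u - N u * v i u <> 0)
  (HPS : forall u, D u ->
     P u + S u = gradprod n g N B u + T1 u * N u + T2 u * M u
                 + Z1 u * B u + Z2 u * A u)
  i k u : (i < n)%nat -> (k < n)%nat -> i <> k -> D u ->
  let nv := fun i u => lap_i n g i N u + w1 i u * N u + Z1 u
                       + w2 i u * M u + v i u * Z2 u in
  let bv := fun i u => lap_i n g i B u + w1 i u * B u + T1 u
                       + w2 i u * A u + v i u * T2 u in
  let Q := fun u => / 2 * gradsq n g B u + B u * T1 u + A u * T2 u in
  let Rc := fun u => / 2 * gradsq n g N u + N u * Z1 u + M u * Z2 u in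
  let vh := vhat v B A N M in
  let gh := ghat v g B A N M in
  let nh := fun i u => Hratio v B A N M i u * nv i u - P u - vh i u * Rc u in
  let bh := fun i u => Hratio v B A N M i u * bv i u - Q u - vh i u * S u in
  Rik n gh i k u = nh i u * vh k u + nh k u * vh i u + bh i u + bh k u.
Proof.
  intros Hi Hk Hik Du nv bv Q Rc vh gh nh bh.
  assert (Hgnz : forall m u, (m < n)%nat -> D u -> g m u <> 0) by (intros; apply (proj1 Hg); auto).
  assert (Hvd : forall a b u, (a < n)%nat -> (b < n)%nat -> a <> b -> D u -> v a u - v b u <> 0)
    by (intros a b u' Ha Hb Hab Du'; intro; apply (Hhyp a b u'); auto; lra).
  assert (HE1 : forall a b u', (a < n)%nat -> (b < n)%nat -> a <> b -> D u' ->
     dlnH gh b a u' = dlnH g b a u' + ap v g B A N M b a u').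
  { intros a b u' Ha Hb Hab Du'. apply gh_dlnH; auto; try solve [apply (sm_ex n D); auto].
    all: try (apply (proj2 Hg); auto). all: try (apply Hvd; auto). }
  assert (HE1d : forall a u', (a < n)%nat -> D u' ->
     dlnH gh a a u' = dlnH g a a u' + apd v g B A N M a u').
  { intros a u' Ha Du'. apply gh_dlnH_d; auto; try solve [apply (sm_ex n D); auto]. }
  assert (HG : forall m u', (m < n)%nat -> D u' -> gh m u' <> 0) by (intros; apply (gh_nz n D); auto).
  unfold Rik. unfold Riem at 1.
  rewrite Gamma_iij.
  rewrite (pd_local n D k (dlnH gh k i) (fun u' => dlnH g k i u' + ap v g B A N M k i u')) by (auto; intros; apply HE1; auto).
  rewrite (pd_local n D i (Gamma gh i k k) (fun u' => - (gh k u' / gh i u') * (dlnH g i k u' + ap v g B A N M i k u'))).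
  2,3,4: auto.
  2:{ intros u' Du'. rewrite <- HE1 by auto. unfold Gamma. eqbs. unfold dlnH. field. split; apply HG; auto. }
  unfold ap. pdlam.
  all: try solve [ apply (sm_ex2 n D); auto | apply (sm_ex n D); auto | apply (ex_dlnH n D); auto | apply (ex_gh n D); auto ].
  assert (Pgh : forall a b, (a < n)%nat -> (b < n)%nat -> a <> b -> pd a (gh b) u = 2 * gh b u * (dlnH g a b u + ap v g B A N M a b u)).
  { intros a b Ha Hb Hab. rewrite (pd_g_eta gh a b u) by auto. rewrite HE1 by auto. ring. }
  assert (Pghd : forall a, (a < n)%nat -> pd a (gh a) u = 2 * gh a u * (dlnH g a a u + apd v g B A N M a u)).
  { intros a Ha. rewrite (pd_g_eta gh a a u) by auto. rewrite HE1d by auto. ring. }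
  rewrite (Pgh i k), (Pghd i) by auto.
  rewrite (lame_v n D v g i k u), (lame_v n D v g k i u) by auto.
  rewrite (HNM i u), (HNM k u), (HBA i u), (HBA k u) by auto.
  rewrite (sumR_split2 n i k (fun m => Gamma gh i i m u * Gamma gh m k k u - Gamma gh i k m u * Gamma gh m i k u)) by auto.
  cbv beta. rewrite !(Gamma_eq gh) by auto. eqbs. unfold eta.
  rewrite (HE1 i k u), (HE1 k i u), (HE1d i u), (HE1d k u) by auto.
  assert (HX := Hcurv i k u Hi Hk Hik Du). unfold Rik in HX.
  unfold Riem in HX. rewrite Gamma_iij in HX.
  rewrite (pd_local n D i (Gamma g i k k) (fun u' => - (g k u' / g i u') * dlnH g i k u')) in HX.
  2,3,4: auto.
  2:{ intros u' Du'. unfold Gamma. eqbs. unfold dlnH. field. split; apply Hgnz; auto. }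
  erewrite (pd_spec i (fun u' => - (g k u' / g i u') * dlnH g i k u') u) in HX.
  2:{ cbv beta; dl. all: try solve [ apply (sm_ex2 n D); auto | apply (sm_ex n D); auto | apply (ex_dlnH n D); auto ]. all: dlfin; auto. }
  cbv beta in HX; rewrite ?upd_same in HX.
  rewrite (pd_g_eta g i k u), (pd_g_eta g i i u) in HX by auto.
  rewrite (sumR_split2 n i k (fun m => Gamma g i i m u * Gamma g m k k u - Gamma g i k m u * Gamma g m i k u)) in HX by auto.
  cbv beta in HX. rewrite !(Gamma_eq g) in HX by auto. unfold eta in HX. revert HX. eqbs. intro HX.
  unfold nh, bh, nv, bv, Q, Rc, lap_i, gradsq.
  assert (HS : S u = gradprod n g N B u + T1 u * N u + T2 u * M u + Z1 u * B u + Z2 u * A u - P u)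
    by (rewrite <- HPS by auto; ring).
  rewrite HS. unfold gradprod.
  rewrite (sumR_split2 n i k (fun m => Gamma g m i i u * pd m N u)),
    (sumR_split2 n i k (fun m => Gamma g m k k u * pd m N u)),
    (sumR_split2 n i k (fun m => Gamma g m i i u * pd m B u)),
    (sumR_split2 n i k (fun m => Gamma g m k k u * pd m B u)),
    (sumR_split2 n i k (fun m => / g m u * pd m N u ^ 2)),
    (sumR_split2 n i k (fun m => / g m u * pd m B u ^ 2)),
    (sumR_split2 n i k (fun m => / g m u * pd m N u * pd m B u)) by auto.
  cbv beta. rewrite !(Gamma_eq g) by auto. eqbs.
  assert (Hrest : sumR n (rest2 i k (fun m => Gamma gh i i m u * Gamma gh m k k u - Gamma gh i k m u * Gamma gh m i k u))
    = sumR n (lincomb [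
       (gh k u * Hratio v B A N M i u * Hratio v B A N M k u / g k u,
          rest2 i k (fun m => Gamma g i i m u * Gamma g m k k u - Gamma g i k m u * Gamma g m i k u));
       (- gh k u * Hratio v B A N M i u * vh k u / g i u, rest2 i k (fun m => Gamma g m i i u * pd m N u));
       (- gh k u * Hratio v B A N M k u * vh i u / g k u, rest2 i k (fun m => Gamma g m k k u * pd m N u));
       (- gh k u * Hratio v B A N M i u / g i u, rest2 i k (fun m => Gamma g m i i u * pd m B u));
       (- gh k u * Hratio v B A N M k u / g k u, rest2 i k (fun m => Gamma g m k k u * pd m B u));
       (- gh k u * vh i u * vh k u, rest2 i k (fun m => / g m u * pd m N u ^ 2));
       (- gh k u, rest2 i k (fun m => / g m u * pd m B u ^ 2));
       (- gh k u * (vh i u + vh k u), rest2 i k (fun m => / g m u * pd m N u * pd m B u))])).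
  { apply sumR_ext. intros m Hm. unfold lincomb, rest2. cbn [fold_right fst snd].
    destruct (Nat.eqb_spec m i); destruct (Nat.eqb_spec m k); simpl; try ring.
    rewrite !(Gamma_eq gh) by auto. rewrite !(Gamma_eq g) by auto. eqbs. unfold eta.
    rewrite (HE1 i m u), (HE1 k m u) by auto.
    unfold ap, gh, ghat, Hratio, vh, vhat. unfold Rsqr.
    field. repeat split; auto. }
  rewrite Hrest, sumR_lincomb. cbn [fold_right fst snd].
  set (Sg := sumR n (rest2 i k (fun m => Gamma g i i m u * Gamma g m k k u - Gamma g i k m u * Gamma g m i k u))) in *.
  set (Y1 := pd i (dlnH g i k) u) in *.
  match type of HX with ?L = _ => assert (Hw : w1 i u = L - w1 k u - w2 i u * v k u - w2 k u * v i u) by (rewrite HX; ring) end.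
  rewrite Hw. clear Hw HX Hrest HS.
  unfold eta, ap, apd, gh, ghat, Hratio, vh, vhat. unfold Rsqr.
  field. repeat split; auto.
Qed.


Theorem theorem3p2
  (n : nat) (D : pt -> Prop) (v g w1 w2 : nat -> fn)
  (B A N M T1 T2 Z1 Z2 P S : fn)
  (HD : open_dom n D)
  (Hsm_v : forall i, (i < n)%nat -> smooth n D (v i))
  (Hsm_g : forall i, (i < n)%nat -> smooth n D (g i))
  (Hsm_w1 : forall i, (i < n)%nat -> smooth n D (w1 i))
  (Hsm_w2 : forall i, (i < n)%nat -> smooth n D (w2 i))
  (Hsm_B : smooth n D B) (Hsm_A : smooth n D A)
  (Hsm_N : smooth n D N) (Hsm_M : smooth n D M)
  (Hsm_T1 : smooth n D T1) (Hsm_T2 : smooth n D T2)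
  (Hsm_Z1 : smooth n D Z1) (Hsm_Z2 : smooth n D Z2)
  (Hhyp : strictly_hyperbolic n D v)
  (HDN : DN_system n D v)
  (Hg : metric_of_system n D v g)
  (Hw1 : affinor n D g w1) (Hw2 : affinor n D g w2)
  (Hcurv : forall i k u, (i < n)%nat -> (k < n)%nat -> i <> k -> D u ->
     Rik n g i k u = w1 i u + w1 k u + w2 i u * v k u + w2 k u * v i u)
  (HBA : conservation_law n D v B A)
  (HNM : conservation_law n D v N M)
  (Hdet : forall u, D u -> B u * M u - A u * N u <> 0)
  (Hden : forall i u, (i < n)%nat -> D u -> M u - N u * v i u <> 0)
  (HT1 : forall i u, (i < n)%nat -> D u -> pd i T1 u = w1 i u * pd i B u)
  (HT2 : forall i u, (i < n)%nat -> D u -> pd i T2 u = w2 i u * pd i B u)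
  (HZ1 : forall i u, (i < n)%nat -> D u -> pd i Z1 u = w1 i u * pd i N u)
  (HZ2 : forall i u, (i < n)%nat -> D u -> pd i Z2 u = w2 i u * pd i N u)
  (HPS : forall u, D u ->
     P u + S u = gradprod n g N B u + T1 u * N u + T2 u * M u
                 + Z1 u * B u + Z2 u * A u) :
  let nv := fun i u => lap_i n g i N u + w1 i u * N u + Z1 u
                       + w2 i u * M u + v i u * Z2 u in
  let bv := fun i u => lap_i n g i B u + w1 i u * B u + T1 u
                       + w2 i u * A u + v i u * T2 u in
  let Q := fun u => / 2 * gradsq n g B u + B u * T1 u + A u * T2 u in
  let Rc := fun u => / 2 * gradsq n g N u + N u * Z1 u + M u * Z2 u in
  let vh := vhat v B A N M in
  let gh := ghat v g B A N M in
  let nh := fun i u => Hratio v B A N M i u * nv i u - P u - vh i u * Rc u in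
  let bh := fun i u => Hratio v B A N M i u * bv i u - Q u - vh i u * S u in
  (forall i k u, (i < n)%nat -> (k < n)%nat -> i <> k -> D u ->
     Rik n gh i k u = nh i u * vh k u + nh k u * vh i u + bh i u + bh k u)
  /\
  (forall i j k l u, (i < n)%nat -> (j < n)%nat -> (k < n)%nat -> (l < n)%nat ->
     D u -> (i = j \/ ~ ((k = i /\ l = j) \/ (k = j /\ l = i))) ->
     Riem n gh i j k l u = 0).
Proof.
  intros nv bv Q Rc vh gh nh bh. split.
  - intros i k u Hi Hk Hik Du.
    exact (part1 n D v g w1 w2 B A N M T1 T2 Z1 Z2 P S HD Hsm_v Hsm_g Hsm_B Hsm_A Hsm_N Hsm_M
      Hhyp Hg Hcurv HBA HNM Hdet Hden HPS i k u Hi Hk Hik Du).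
  - intros i j k l u Hi Hj Hk Hl Du Hc.
    exact (part2 n D v g B A N M HD Hsm_v Hsm_g Hsm_B Hsm_A Hsm_N Hsm_M Hhyp HDN Hg HBA HNM Hdet Hden
      i j k l u Hi Hj Hk Hl Du Hc).
Qed.
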